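(* Let $N\ge 2$, $0<p<1\le q$ with $pq<1$, and let $(u,v)$ be a positive radially symmetric solution of $\Delta u=v^p$, $\Delta v=|\nabla u|^q$ in $\mathbb{R}^N$, written as functions of $r=|x|$. For $t=\ln r\in\mathbb{R}$ define $$Y(t)=\frac{rv'(r)}{v(r)},\qquad Z(t)=\frac{rv^p(r)}{u'(r)},\qquad W(t)=\frac{r\,(u'(r))^q}{v'(r)}.$$ Then for all $t\in\mathbb{R}$: $$0\le Y(t)\le\frac{2+q}{1-pq},\qquad N\le Z(t)\le N+\frac{p(2+q)}{1-pq},\qquad N+q\le W(t)\le N-2+\frac{2+q}{1-pq}.$$
   Context: A positive radially symmetric solution is a pair of radially symmetric functions $u,v\in C^2(\mathbb{R}^N)$, positive everywhere, satisfying the equations pointwise; for such solutions $u'(r)>0$ and $v'(r)>0$ for $r>0$, so $Y,Z,W$ are well defined. *)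

(* Defs.v *)
From Stdlib Require Import Reals Lra.
Open Scope R_scope.

(* Points of R^N are represented as functions nat -> R; only the
   coordinates 0..N-1 are used. *)
Fixpoint sumN (n : nat) (f : nat -> R) : R :=
  match n with
  | O => 0
  | S k => sumN k f + f k
  end.

Definition enorm (N : nat) (x : nat -> R) : R := sqrt (sumN N (fun i => x i ^ 2)).

Definition edist (N : nat) (x y : nat -> R) : R := enorm N (fun i => y i - x i).

Definition upd (x : nat -> R) (i : nat) (s : R) : nat -> R :=
  fun j => if Nat.eqb j i then s else x j.

Definition is_partial (f : (nat -> R) -> R) (i : nat) (x : nat -> R) (l : R) : Prop :=
  derivable_pt_lim (fun s => f (upd x i s)) (x i) l.

Definition contN (N : nat) (g : (nat -> R) -> R) : Prop :=
  forall x eps, 0 < eps -> exists delta, 0 < delta /\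
    forall y, edist N x y < delta -> Rabs (g y - g x) < eps.

Definition C2_with (N : nat) (f : (nat -> R) -> R)
  (D1 : nat -> (nat -> R) -> R) (D2 : nat -> nat -> (nat -> R) -> R) : Prop :=
  contN N f /\
  (forall i x, (i < N)%nat -> is_partial f i x (D1 i x)) /\
  (forall i, (i < N)%nat -> contN N (D1 i)) /\
  (forall i j x, (i < N)%nat -> (j < N)%nat -> is_partial (D1 i) j x (D2 i j x)) /\
  (forall i j, (i < N)%nat -> (j < N)%nat -> contN N (D2 i j)).

Definition laplacian (N : nat) (D2 : nat -> nat -> (nat -> R) -> R) (x : nat -> R) : R :=
  sumN N (fun i => D2 i i x).
Definition gradnorm (N : nat) (D1 : nat -> (nat -> R) -> R) (x : nat -> R) : R :=
  sqrt (sumN N (fun i => D1 i x ^ 2)).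

(* a^q for a >= 0, q > 0, with the convention 0^q = 0
   (Stdlib's Rpower 0 q is 1, which would be wrong here). *)
Definition rpow0 (a q : R) : R := if Rle_dec a 0 then 0 else Rpower a q.

Definition radial_positive_solution (N : nat) (p q : R) (u v : R -> R) : Prop :=
  (forall r, 0 <= r -> 0 < u r /\ 0 < v r) /\
  exists DU1 DU2 DV1 DV2,
    C2_with N (fun x => u (enorm N x)) DU1 DU2 /\
    C2_with N (fun x => v (enorm N x)) DV1 DV2 /\
    (forall x, laplacian N DU2 x = Rpower (v (enorm N x)) p) /\
    (forall x, laplacian N DV2 x = rpow0 (gradnorm N DU1 x) q).

(* Main.v *)
Require Import Defs.
From Stdlib Require Import Reals Lra Lia Classical FunctionalExtensionality.
Open Scope R_scope.

Lemma dlim_eq f x l l' : derivable_pt_lim f x l -> l = l' -> derivable_pt_lim f x l'.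
Proof. intros H ->; exact H. Qed.
Lemma dmul f g x a b : derivable_pt_lim f x a -> derivable_pt_lim g x b ->
  derivable_pt_lim (fun y => f y * g y) x (a * g x + f x * b).
Proof. intros. exact (derivable_pt_lim_mult f g x a b H H0). Qed.
Lemma dplus f g x a b : derivable_pt_lim f x a -> derivable_pt_lim g x b ->
  derivable_pt_lim (fun y => f y + g y) x (a + b).
Proof. intros. exact (derivable_pt_lim_plus f g x a b H H0). Qed.
Lemma dminus f g x a b : derivable_pt_lim f x a -> derivable_pt_lim g x b ->
  derivable_pt_lim (fun y => f y - g y) x (a - b).
Proof. intros. exact (derivable_pt_lim_minus f g x a b H H0). Qed.
Lemma dconst c x : derivable_pt_lim (fun _ => c) x 0.
Proof. exact (derivable_pt_lim_const c x). Qed.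
Lemma did x : derivable_pt_lim (fun y => y) x 1.
Proof. exact (derivable_pt_lim_id x). Qed.
Lemma dcmul c f x a : derivable_pt_lim f x a -> derivable_pt_lim (fun y => c * f y) x (c * a).
Proof. intros. apply dlim_eq with (0 * f x + c * a). apply (dmul (fun _ => c) f); auto using dconst. ring. Qed.
Lemma dpowS k x : derivable_pt_lim (fun y => y ^ S k) x ((INR k + 1) * x ^ k).
Proof. apply dlim_eq with (INR (S k) * x ^ pred (S k)). apply derivable_pt_lim_pow. rewrite S_INR; reflexivity. Qed.
Lemma drpow f x a c : 0 < f x -> derivable_pt_lim f x a ->
  derivable_pt_lim (fun y => Rpower (f y) c) x (c * Rpower (f x) c / f x * a).
Proof. intros Hp Hd.
  apply dlim_eq with (c * Rpower (f x) (c - 1) * a).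
  - exact (derivable_pt_lim_comp f (fun z => Rpower z c) x a _ Hd (derivable_pt_lim_power (f x) c Hp)).
  - assert (E : Rpower (f x) c = Rpower (f x) (c - 1) * f x).
    { rewrite <- (Rpower_1 (f x)) at 3 by auto. rewrite <- Rpower_plus. f_equal; ring. }
    rewrite E. field. lra.
Qed.

Lemma Rpower_pos a c : 0 < Rpower a c.
Proof. unfold Rpower; apply exp_pos. Qed.

Lemma pow_le1 r k : 0 <= r <= 1 -> r ^ k <= 1.
Proof. intros H; induction k; simpl; [lra|]. assert (0 <= r ^ k) by (apply pow_le; lra). nra. Qed.

Lemma small k g : (exists d B, 0 < d /\ forall r, 0 < r < d -> Rabs (g r) <= B) ->
  forall eps, 0 < eps -> exists d, 0 < d /\ forall r, 0 < r < d -> - eps < r ^ S k * g r.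
Proof.
  intros (d & B & Hd & HB) eps He.
  assert (HB0 : 0 <= B) by (specialize (HB (d/2)); assert (0 <= Rabs (g (d/2))) by apply Rabs_pos;
     assert (Rabs (g (d/2)) <= B) by (apply HB; lra); lra).
  exists (Rmin d (Rmin 1 (eps / (B + 1)))). split.
  { apply Rmin_pos; [lra| apply Rmin_pos; [lra| apply Rdiv_lt_0_compat; lra]]. }
  intros r [Hr0 Hr1].
  assert (r < d) by (eapply Rlt_le_trans; [exact Hr1| apply Rmin_l]).
  assert (r < Rmin 1 (eps / (B + 1))) by (eapply Rlt_le_trans; [exact Hr1| apply Rmin_r]).
  assert (r < 1) by (eapply Rlt_le_trans; [exact H0| apply Rmin_l]).
  assert (r < eps / (B + 1)) by (eapply Rlt_le_trans; [exact H0| apply Rmin_r]).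
  assert (r * (B + 1) < eps) by (apply (Rmult_lt_compat_r (B+1)) in H2; [|lra];
     unfold Rdiv in H2; rewrite Rmult_assoc, Rinv_l in H2 by lra; lra).
  specialize (HB r (conj Hr0 H)).
  assert (Hk : 0 <= r ^ k <= 1) by (split; [apply pow_le; lra| apply pow_le1; lra]).
  simpl. assert (Rabs (r * r ^ k * g r) <= r * B).
  { rewrite !Rabs_mult, (Rabs_pos_eq r), (Rabs_pos_eq (r ^ k)) by lra. 
    assert (0 <= Rabs (g r)) by apply Rabs_pos.
    assert (Hq : r ^ k * Rabs (g r) <= B) by nra.
    apply Rmult_le_compat_l with (r := r) in Hq; lra. }
  pose proof (Rle_abs (- (r * r ^ k * g r))) as H8. rewrite Rabs_Ropp in H8. nra.
Qed.

Lemma L0w (F F' : R -> R) R0 :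
  (forall r, 0 < r < R0 -> derivable_pt_lim F r (F' r)) ->
  (forall r, 0 < r < R0 -> 0 <= F' r) ->
  (forall eps, 0 < eps -> exists d, 0 < d /\ forall r, 0 < r < d -> - eps < F r) ->
  forall r, 0 < r < R0 -> 0 <= F r.
Proof.
  intros Hd Hp Hl r Hr. destruct (Rle_or_lt 0 (F r)) as [|Hn]; auto.
  destruct (Hl (- F r) ltac:(lra)) as (d & Hd0 & Hdd).
  set (s := Rmin d r / 2).
  assert (Hs : 0 < s < r /\ s < d).
  { unfold s. pose proof (Rmin_l d r). pose proof (Rmin_r d r). pose proof (Rmin_pos d r Hd0 ltac:(lra)). lra. }
  destruct (MVT_cor2 F F' s r ltac:(lra)) as (c & Hc & Hcr).
  { intros c Hc. apply Hd. lra. }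
  assert (0 <= F' c) by (apply Hp; lra).
  specialize (Hdd s ltac:(lra)). nra.
Qed.

Lemma L0s (F F' : R -> R) R0 :
  (forall r, 0 < r < R0 -> derivable_pt_lim F r (F' r)) ->
  (forall r, 0 < r < R0 -> 0 < F' r) ->
  (forall eps, 0 < eps -> exists d, 0 < d /\ forall r, 0 < r < d -> - eps < F r) ->
  forall r, 0 < r < R0 -> 0 < F r.
Proof.
  intros Hd Hp Hl r Hr.
  assert (0 <= F (r/2)) by (apply (L0w F F' R0); auto; [intros; left; apply Hp; auto | lra]).
  destruct (MVT_cor2 F F' (r/2) r ltac:(lra)) as (c & Hc & Hcr).
  { intros c Hc. apply Hd. lra. }
  assert (0 < F' c) by (apply Hp; lra). nra.
Qed.

Lemma first_cross (f : R -> R) :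
  (forall r, 0 < r -> continuity_pt f r) ->
  (exists d, 0 < d /\ forall r, 0 < r < d -> 0 < f r) ->
  forall r0, 0 < r0 -> f r0 <= 0 ->
  exists r1, 0 < r1 /\ r1 <= r0 /\ f r1 <= 0 /\ forall r, 0 < r < r1 -> 0 < f r.
Proof.
  intros Hc (d & Hd & Hpos) r0 Hr0 Hf0.
  set (E := fun x => 0 < x <= r0 /\ forall y, 0 < y <= x -> 0 < f y).
  assert (Hd' : exists x, E x).
  { exists (Rmin d r0 / 2). pose proof (Rmin_l d r0). pose proof (Rmin_r d r0).
    pose proof (Rmin_pos d r0 Hd Hr0). split; [lra|]. intros y Hy. apply Hpos. lra. }
  assert (Hb : bound E) by (exists r0; intros x Hx; apply Hx).
  destruct (completeness E Hb Hd') as [m [Hub Hlub]].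
  destruct Hd' as [x0 Hx0].
  assert (Hm0 : 0 < m) by (pose proof (Hub x0 Hx0); destruct Hx0; lra).
  assert (Hmr : m <= r0) by (apply Hlub; intros x Hx; apply Hx).
  assert (Hbelow : forall r, 0 < r < m -> 0 < f r).
  { intros r Hr. destruct (Rle_or_lt r x0) as [Hl|Hl].
    - apply Hx0; lra.
    - destruct (classic (exists x, E x /\ r < x)) as [[x [Ex Hrx]]|Hno].
      + apply (proj2 Ex); lra.
      + exfalso. assert (m <= r); [|lra]. apply Hlub. intros x Ex.
        destruct (Rle_or_lt x r); auto. exfalso; apply Hno; eauto. }
  exists m. repeat split; auto.
  destruct (Rle_or_lt (f m) 0) as [|Hfm]; auto. exfalso.
  destruct (Req_dec m r0) as [->|Hne]; [lra|].
  specialize (Hc m Hm0). unfold continuity_pt, continue_in, limit1_in, limit_in in Hc.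
  destruct (Hc (f m) Hfm) as (eta & Heta & Hcont). simpl in Hcont. unfold R_dist in Hcont.
  set (x' := Rmin (m + eta/2) r0).
  assert (Hx' : m < x' <= r0).
  { unfold x'. pose proof (Rmin_r (m + eta/2) r0). split; [|lra].
    apply Rmin_glb_lt; lra. }
  assert (E x').
  { split; [lra|]. intros y Hy. destruct (Rlt_or_le y m) as [Hl|Hl]; [apply Hbelow; lra|].
    destruct (Req_dec y m) as [->|Hym]; [lra|].
    assert (Hyx : y <= m + eta / 2) by (pose proof (Rmin_l (m + eta/2) r0); unfold x' in Hy; lra).
    assert (Hcc : Rabs (f y - f m) < f m).
    { apply Hcont. split. { unfold D_x, no_cond. split; auto. }
      rewrite Rabs_pos_eq; lra. }
    pose proof (Rle_abs (- (f y - f m))). rewrite Rabs_Ropp in H. lra. }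
  pose proof (Hub x' H). lra.
Qed.

Lemma abs_inv a b : Rabs a <= b -> - b <= a <= b.
Proof. intros H. pose proof (Rle_abs a). pose proof (Rle_abs (-a)). rewrite Rabs_Ropp in H1. lra. Qed.

Lemma pos_of_mul a b : 0 < a -> 0 < a * b -> 0 < b.
Proof. intros Ha H. destruct (Rle_or_lt b 0); auto. nra. Qed.
Lemma nneg_of_mul a b : 0 < a -> 0 <= a * b -> 0 <= b.
Proof. intros Ha H. destruct (Rle_or_lt 0 b); auto. nra. Qed.

Lemma rpow0_pos a q : 0 < a -> rpow0 (Rabs a) q = Rpower a q.
Proof. intros Ha. unfold rpow0. rewrite Rabs_pos_eq by lra. destruct (Rle_dec a 0); [lra|auto]. Qed.

Section B.
Variables (M : nat) (p q : R) (v u1 v1 : R -> R).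
Hypotheses (Hp0 : 0 < p) (Hp1 : p < 1) (Hq1 : 1 <= q) (Hpq : p * q < 1).
Hypothesis Hvpos : forall r, 0 < r -> 0 < v r.
Hypothesis Hvd : forall r, 0 < r -> derivable_pt_lim v r (v1 r).
Hypothesis Hu1d : forall r, 0 < r -> derivable_pt_lim u1 r (Rpower (v r) p - (INR M + 1) * (u1 r / r)).
Hypothesis Hv1d : forall r, 0 < r -> derivable_pt_lim v1 r (rpow0 (Rabs (u1 r)) q - (INR M + 1) * (v1 r / r)).
Hypothesis Hbd : exists d B, 0 < d /\ forall r, 0 < r < d -> Rabs (u1 r) <= B /\ Rabs (v1 r) <= B /\ v r <= B.
Hypothesis Hlow : exists d c, 0 < d /\ 0 < c /\ forall r, 0 < r < d -> c <= v r.

Lemma bnd3 (S : R -> R) (C : R -> R) :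
  (forall B r, 0 < r <= 1 -> Rabs (u1 r) <= B -> Rabs (v1 r) <= B -> 0 < v r <= B -> Rabs (S r) <= C B) ->
  exists d B, 0 < d /\ forall r, 0 < r < d -> Rabs (S r) <= B.
Proof.
  intros HS. destruct Hbd as (d & B & Hd & HB). exists (Rmin d 1), (C B). split.
  { apply Rmin_pos; lra. }
  intros r Hr. pose proof (Rmin_l d 1). pose proof (Rmin_r d 1).
  destruct (HB r ltac:(lra)) as (h1 & h2 & h3). apply HS; auto; try lra. split; auto; apply Hvpos; lra.
Qed.

Lemma u1_pos : forall r, 0 < r -> 0 < u1 r.
Proof.
  intros r Hr. apply (pos_of_mul (r ^ S M)); [apply pow_lt; lra|].
  apply (L0s (fun r => r ^ S M * u1 r) (fun r => r ^ S M * Rpower (v r) p) (r + 1)); [| | |lra].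
  - intros x Hx. eapply dlim_eq. apply dmul; [apply dpowS| apply Hu1d; lra].
    simpl. field. lra.
  - intros x Hx. apply Rmult_lt_0_compat; [apply pow_lt; lra| apply Rpower_pos].
  - apply small. apply (bnd3 u1 (fun B => B)). intros; auto.
Qed.

Lemma v1_pos : forall r, 0 < r -> 0 < v1 r.
Proof.
  intros r Hr. apply (pos_of_mul (r ^ S M)); [apply pow_lt; lra|].
  apply (L0s (fun r => r ^ S M * v1 r) (fun r => r ^ S M * Rpower (u1 r) q) (r + 1)); [| | |lra].
  - intros x Hx. eapply dlim_eq. apply dmul; [apply dpowS| apply Hv1d; lra].
    rewrite rpow0_pos by (apply u1_pos; lra). simpl. field. lra.
  - intros x Hx. apply Rmult_lt_0_compat; [apply pow_lt; lra| apply Rpower_pos].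
  - apply small. apply (bnd3 v1 (fun B => B)). intros; auto.
Qed.


Lemma vp_bnd B r : 0 < v r <= B -> 0 < Rpower (v r) p <= Rpower B p.
Proof. intros H. split; [apply Rpower_pos|]. apply Rle_Rpower_l; lra. Qed.

Lemma SF_nneg : forall r, 0 < r -> 0 <= r * Rpower (v r) p - (INR M + 2) * u1 r.
Proof.
  intros r Hr. apply (nneg_of_mul (r ^ S M)); [apply pow_lt; lra|].
  apply (L0w (fun r => r ^ S M * (r * Rpower (v r) p - (INR M + 2) * u1 r))
             (fun r => r ^ S M * r * p * Rpower (v r) p / v r * v1 r) (r + 1)); [| | |lra].
  - intros x Hx. assert (0 < v x) by (apply Hvpos; lra). eapply dlim_eq.
    apply dmul; [apply dpowS|]. apply dminus.
    + apply dmul; [apply did| apply drpow; auto; apply Hvd; lra].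
    + apply dcmul. apply Hu1d; lra.
    + simpl. field. lra.
  - intros x Hx. assert (0 < v x) by (apply Hvpos; lra). assert (0 < v1 x) by (apply v1_pos; lra).
    assert (0 < x ^ S M) by (apply pow_lt; lra). pose proof (Rpower_pos (v x) p).
    set (P := x ^ S M) in *. set (V := Rpower (v x) p) in *.
    unfold Rdiv. apply Rmult_le_pos; [|lra]. apply Rmult_le_pos; [|left; apply Rinv_0_lt_compat; lra].
    apply Rmult_le_pos; [apply Rmult_le_pos; [apply Rmult_le_pos; lra | lra] | lra].
  - apply small. apply (bnd3 _ (fun B => Rpower B p + (INR M + 2) * B)). intros B x Hx h1 h2 h3.
    pose proof (vp_bnd B x h3). apply abs_inv in h1. pose proof (pos_INR M). apply Rabs_le. split; nra.
Qed.

Lemma SG_nneg : forall r, 0 < r -> 0 <= r * Rpower (u1 r) q - (INR M + 2 + q) * v1 r.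
Proof.
  intros r Hr. apply (nneg_of_mul (r ^ S M)); [apply pow_lt; lra|].
  apply (L0w (fun r => r ^ S M * (r * Rpower (u1 r) q - (INR M + 2 + q) * v1 r))
             (fun r => r ^ S M * q * Rpower (u1 r) q / u1 r * (r * Rpower (v r) p - (INR M + 2) * u1 r)) (r + 1)); [| | |lra].
  - intros x Hx. assert (0 < u1 x) by (apply u1_pos; lra). eapply dlim_eq.
    apply dmul; [apply dpowS|]. apply dminus.
    + apply dmul; [apply did| apply drpow; auto; apply Hu1d; lra].
    + apply dcmul. apply Hv1d; lra.
    + rewrite rpow0_pos by auto. simpl. field. lra.
  - intros x Hx. assert (0 < u1 x) by (apply u1_pos; lra). pose proof (SF_nneg x ltac:(lra)).
    assert (0 < x ^ S M) by (apply pow_lt; lra). pose proof (Rpower_pos (u1 x) q).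
    set (P := x ^ S M) in *. set (V := Rpower (u1 x) q) in *.
    apply Rmult_le_pos; [|lra]. unfold Rdiv. apply Rmult_le_pos; [|left; apply Rinv_0_lt_compat; lra].
    apply Rmult_le_pos; [apply Rmult_le_pos; lra | lra].
  - apply small. apply (bnd3 _ (fun B => Rpower B q + (INR M + 2 + q) * B)). intros B x Hx h1 h2 h3.
    assert (0 < u1 x) by (apply u1_pos; lra).
    assert (Rpower (u1 x) q <= Rpower B q) by (apply Rle_Rpower_l; [lra| apply abs_inv in h1; lra]).
    pose proof (Rpower_pos (u1 x) q).
    apply abs_inv in h2. pose proof (pos_INR M). apply Rabs_le. split; nra.
Qed.


Let K := (2 + q) / (1 - p * q).
Lemma Kpos : 0 < K.
Proof. unfold K. apply Rdiv_lt_0_compat; lra. Qed.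

Lemma Pf_der r : 0 < r -> derivable_pt_lim (fun r => K * v r - r * v1 r) r
   ((INR M + K) * v1 r - r * Rpower (u1 r) q).
Proof.
  intros Hr. eapply dlim_eq. apply dminus; [apply dcmul; apply Hvd; lra| apply dmul; [apply did| apply Hv1d; lra]].
  rewrite rpow0_pos by (apply u1_pos; lra). field. lra.
Qed.

Lemma SH_pos_upto R0 : (forall r, 0 < r < R0 -> 0 < K * v r - r * v1 r) ->
  forall r, 0 < r < R0 -> 0 < (INR M + 2 + p * K) * u1 r - r * Rpower (v r) p.
Proof.
  intros HP r Hr. apply (pos_of_mul (r ^ S M)); [apply pow_lt; lra|].
  apply (L0s (fun r => r ^ S M * ((INR M + 2 + p * K) * u1 r - r * Rpower (v r) p))
             (fun r => r ^ S M * p * Rpower (v r) p / v r * (K * v r - r * v1 r)) R0); auto.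
  - intros x Hx. assert (0 < v x) by (apply Hvpos; lra). eapply dlim_eq.
    apply dmul; [apply dpowS|]. apply dminus.
    + apply dcmul. apply Hu1d; lra.
    + apply dmul; [apply did| apply drpow; auto; apply Hvd; lra].
    + simpl. field. lra.
  - intros x Hx. assert (0 < v x) by (apply Hvpos; lra). pose proof (HP x Hx).
    assert (0 < x ^ S M) by (apply pow_lt; lra). pose proof (Rpower_pos (v x) p).
    set (P := x ^ S M) in *. set (V := Rpower (v x) p) in *.
    apply Rmult_lt_0_compat; [|lra]. unfold Rdiv. apply Rmult_lt_0_compat; [|apply Rinv_0_lt_compat; lra].
    apply Rmult_lt_0_compat; [apply Rmult_lt_0_compat; lra | lra].
  - apply small. apply (bnd3 _ (fun B => (INR M + 2 + p * K) * B + Rpower B p)). intros B x Hx h1 h2 h3.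
    pose proof (vp_bnd B x h3). apply abs_inv in h1. pose proof (pos_INR M). pose proof Kpos.
    assert (0 < INR M + 2 + p * K) by nra.
    apply Rabs_le. split; nra.
Qed.

Lemma SH2_pos_upto R0 : (forall r, 0 < r < R0 -> 0 < (INR M + 2 + p * K) * u1 r - r * Rpower (v r) p) ->
  forall r, 0 < r < R0 -> 0 < (INR M + K) * v1 r - r * Rpower (u1 r) q.
Proof.
  intros HP r Hr. apply (pos_of_mul (r ^ S M)); [apply pow_lt; lra|].
  apply (L0s (fun r => r ^ S M * ((INR M + K) * v1 r - r * Rpower (u1 r) q))
             (fun r => r ^ S M * q * Rpower (u1 r) q / u1 r * ((INR M + 2 + p * K) * u1 r - r * Rpower (v r) p)) R0); auto.
  - intros x Hx. assert (0 < u1 x) by (apply u1_pos; lra). eapply dlim_eq.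
    apply dmul; [apply dpowS|]. apply dminus.
    + apply dcmul. apply Hv1d; lra.
    + apply dmul; [apply did| apply drpow; auto; apply Hu1d; lra].
    + rewrite rpow0_pos by auto. simpl. unfold K. field. lra.
  - intros x Hx. assert (0 < u1 x) by (apply u1_pos; lra). pose proof (HP x Hx).
    assert (0 < x ^ S M) by (apply pow_lt; lra). pose proof (Rpower_pos (u1 x) q).
    set (P := x ^ S M) in *. set (V := Rpower (u1 x) q) in *.
    apply Rmult_lt_0_compat; [|lra]. unfold Rdiv. apply Rmult_lt_0_compat; [|apply Rinv_0_lt_compat; lra].
    apply Rmult_lt_0_compat; [apply Rmult_lt_0_compat; lra | lra].
  - apply small. apply (bnd3 _ (fun B => (INR M + K) * B + Rpower B q)). intros B x Hx h1 h2 h3.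
    assert (0 < u1 x) by (apply u1_pos; lra).
    assert (Rpower (u1 x) q <= Rpower B q) by (apply Rle_Rpower_l; [lra| apply abs_inv in h1; lra]).
    pose proof (Rpower_pos (u1 x) q).
    apply abs_inv in h2. pose proof (pos_INR M). pose proof Kpos.
    apply Rabs_le. split; nra.
Qed.

Lemma SP_pos : forall r, 0 < r -> 0 < K * v r - r * v1 r.
Proof.
  intros r0 Hr0. destruct (Rle_or_lt (K * v r0 - r0 * v1 r0) 0) as [Hn|]; auto. exfalso.
  destruct (first_cross (fun r => K * v r - r * v1 r)) with (r0 := r0) as (r1 & Hr1 & Hr1r & Hf1 & Hb); auto.
  - intros r Hr. apply derivable_continuous_pt. exists ((INR M + K) * v1 r - r * Rpower (u1 r) q). apply Pf_der; auto.
  - destruct Hbd as (d & B & Hd & HB). destruct Hlow as (d2 & c & Hd2 & Hc & Hcl).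
    pose proof Kpos. assert (HB0 : 0 <= B) by (destruct (HB (d/2)) as [h _]; [lra|]; pose proof (Rabs_pos (u1 (d/2))); lra).
    exists (Rmin d (Rmin d2 (K * c / (B + 1)))). split.
    { apply Rmin_pos; [lra| apply Rmin_pos; [lra| apply Rdiv_lt_0_compat; nra]]. }
    intros r Hr. pose proof (Rmin_l d (Rmin d2 (K * c / (B + 1)))). pose proof (Rmin_r d (Rmin d2 (K * c / (B + 1)))).
    pose proof (Rmin_l d2 (K * c / (B + 1))). pose proof (Rmin_r d2 (K * c / (B + 1))).
    destruct (HB r ltac:(lra)) as (_ & h2 & _). apply abs_inv in h2. pose proof (Hcl r ltac:(lra)).
    assert (r * (B + 1) < K * c).
    { assert (Hrk : r < K * c / (B + 1)) by lra. apply (Rmult_lt_compat_r (B + 1)) in Hrk; [|lra].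
      unfold Rdiv in Hrk. rewrite Rmult_assoc, Rinv_l in Hrk by lra. lra. }
    nra.
  - assert (HSH : forall r, 0 < r < r1 -> 0 < (INR M + 2 + p * K) * u1 r - r * Rpower (v r) p) by (apply SH_pos_upto; auto).
    assert (HSH2 := SH2_pos_upto r1 HSH).
    destruct (MVT_cor2 (fun r => K * v r - r * v1 r) (fun r => (INR M + K) * v1 r - r * Rpower (u1 r) q) (r1/2) r1 ltac:(lra)) as (c & Hc & Hcr).
    { intros c Hc. apply Pf_der. lra. }
    assert (0 < (INR M + K) * v1 c - c * Rpower (u1 c) q) by (apply HSH2; lra).
    assert (0 < K * v (r1/2) - r1/2 * v1 (r1/2)) by (apply Hb; lra). nra.
Qed.

Lemma all_bounds r : 0 < r ->
  0 < u1 r /\ 0 < v1 r /\ 0 <= r * Rpower (v r) p - (INR M + 2) * u1 r /\ 0 <= r * Rpower (u1 r) q - (INR M + 2 + q) * v1 r /\ 0 < K * v r - r * v1 r /\ 0 < (INR M + 2 + p * K) * u1 r - r * Rpower (v r) p /\ 0 < (INR M + K) * v1 r - r * Rpower (u1 r) q.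
Proof.
  intros Hr. pose proof (SH_pos_upto (r + 1) ltac:(intros; apply SP_pos; lra)) as HSH.
  refine (conj (u1_pos r Hr) (conj (v1_pos r Hr) (conj (SF_nneg r Hr) (conj (SG_nneg r Hr) (conj (SP_pos r Hr) (conj _ _)))))).
  - apply HSH; lra.
  - apply (SH2_pos_upto (r + 1)); auto. lra.
Qed.

End B.

Definition e (s : R) : nat -> R := upd (fun _ => 0) 0 s.

Lemma sumN_ext n f g : (forall i, (i < n)%nat -> f i = g i) -> sumN n f = sumN n g.
Proof. induction n; simpl; intros H; auto. rewrite IHn by (intros; apply H; lia). rewrite H by lia. auto. Qed.

Lemma sumN_pt n k c : (k < n)%nat -> sumN n (fun j => if Nat.eqb j k then c else 0) = c.
Proof.
  induction n; intros Hk; [lia|]. simpl. destruct (Nat.eq_dec k n) as [->|Hne].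
  - rewrite Nat.eqb_refl. rewrite (sumN_ext n _ (fun _ => 0)).
    + assert (H0 : forall m, sumN m (fun _ => 0) = 0) by (induction m; simpl; [lra| rewrite IHm; lra]).
      rewrite H0. lra.
    + intros i Hi. destruct (Nat.eqb_spec i n); [lia|auto].
  - rewrite IHn by lia. destruct (Nat.eqb_spec n k); [lia|lra].
Qed.

Lemma sumN_plus n f g : sumN n (fun j => f j + g j) = sumN n f + sumN n g.
Proof. induction n; simpl; [lra| rewrite IHn; lra]. Qed.

Lemma sumN_lap n f a b : (1 <= n)%nat -> f 0%nat = a -> (forall i, (1 <= i < n)%nat -> f i = b) ->
  sumN n f = a + (INR n - 1) * b.
Proof.
  intros Hn Ha Hb. induction n; [lia|]. destruct n.
  - simpl. rewrite Ha. change (INR 1) with 1. ring.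
  - change (sumN (S (S n)) f) with (sumN (S n) f + f (S n)). rewrite IHn; [|lia| intros; apply Hb; lia].
    rewrite Hb by lia. rewrite (S_INR (S n)). ring.
Qed.

Lemma enorm_ext N x y : (forall i, (i < N)%nat -> x i = y i) -> enorm N x = enorm N y.
Proof. intros H. unfold enorm. f_equal. apply sumN_ext. intros; rewrite H; auto. Qed.

Lemma sqrt_sq s : sqrt (s ^ 2) = Rabs s.
Proof. rewrite <- sqrt_Rsqr_abs. f_equal. unfold Rsqr. ring. Qed.

Lemma enorm_e N s : (1 <= N)%nat -> enorm N (e s) = Rabs s.
Proof.
  intros HN. unfold enorm. rewrite (sumN_ext N _ (fun j => if Nat.eqb j 0 then s ^ 2 else 0)).
  - rewrite sumN_pt by lia. apply sqrt_sq.
  - intros i Hi. unfold e, upd. destruct (Nat.eqb i 0); auto. ring.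
Qed.

Lemma enorm_e2 N s i t : (1 <= i < N)%nat -> enorm N (upd (e s) i t) = sqrt (s ^ 2 + t ^ 2).
Proof.
  intros HN. unfold enorm. f_equal.
  rewrite (sumN_ext N _ (fun j => (if Nat.eqb j 0 then s ^ 2 else 0) + (if Nat.eqb j i then t ^ 2 else 0))).
  - rewrite sumN_plus, !sumN_pt by lia. ring.
  - intros j Hj. unfold e, upd. destruct (Nat.eqb_spec j i); destruct (Nat.eqb_spec j 0); subst; try lia; ring.
Qed.

Lemma edist_e N a b : (1 <= N)%nat -> edist N (e a) (e b) = Rabs (b - a).
Proof.
  intros HN. unfold edist. rewrite <- (enorm_e N (b - a)) by auto. apply enorm_ext.
  intros i Hi. unfold e, upd. destruct (Nat.eqb i 0); ring.
Qed.

Lemma dlim_ext f g x l : (forall y, f y = g y) -> derivable_pt_lim f x l -> derivable_pt_lim g x l.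
Proof. intros H. replace g with f by (apply functional_extensionality; auto). auto. Qed.

Lemma dlim_loc f g x l d : 0 < d -> (forall y, Rabs (y - x) < d -> f y = g y) ->
  derivable_pt_lim f x l -> derivable_pt_lim g x l.
Proof.
  intros Hd Heq Hf eps He. destruct (Hf eps He) as [del Hdel].
  assert (Hp : 0 < Rmin del d) by (apply Rmin_pos; [apply cond_pos| auto]).
  exists (mkposreal _ Hp). simpl. intros h Hh Hhd.
  pose proof (Rmin_l del d). pose proof (Rmin_r del d).
  rewrite <- (Heq (x + h)), <- (Heq x).
  - apply Hdel; auto; lra.
  - replace (x - x) with 0 by ring. rewrite Rabs_R0. lra.
  - replace (x + h - x) with h by ring. lra.
Qed.

Lemma cont_eps f x : (forall eps, 0 < eps -> exists d, 0 < d /\ forall y, Rabs (y - x) < d -> Rabs (f y - f x) < eps) ->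
  continuity_pt f x.
Proof.
  intros H. unfold continuity_pt, continue_in, limit1_in, limit_in. intros eps He.
  destruct (H eps He) as (d & Hd & Hf). exists d. split; auto. intros y [_ Hy]. simpl in *. unfold R_dist in *. auto.
Qed.

Lemma dlim_of_cont g k : continuity_pt k 0 -> (forall h, g h = k h * h) -> derivable_pt_lim g 0 (k 0).
Proof.
  intros Hc Hg eps He. unfold continuity_pt, continue_in, limit1_in, limit_in in Hc.
  destruct (Hc eps He) as (a & Ha & Hk). exists (mkposreal a Ha). simpl. intros h Hh Hha.
  rewrite !Hg. replace ((k (0 + h) * (0 + h) - k 0 * 0) / h) with (k h).
  - apply (Hk h). split. { unfold D_x, no_cond. split; auto. } simpl. unfold R_dist. rewrite Rminus_0_r. auto.
  - rewrite Rplus_0_l. field. auto.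
Qed.

Lemma drho s t : 0 < s -> derivable_pt_lim (fun y => sqrt (s ^ 2 + y ^ 2)) t (t / sqrt (s ^ 2 + t ^ 2)).
Proof.
  intros Hs. assert (Hp : 0 < s ^ 2 + t ^ 2) by (pose proof (pow2_ge_0 t); pose proof (pow_lt s 2 Hs); lra).
  eapply dlim_eq.
  - apply (derivable_pt_lim_comp (fun y => s ^ 2 + y ^ 2) sqrt t).
    + apply dplus; [apply dconst| apply (dpowS 1)].
    + apply derivable_pt_lim_sqrt. auto.
  - pose proof (sqrt_lt_R0 _ Hp). change (INR 1) with 1. field. lra.
Qed.

Section A.
Variables (N : nat) (f f' : R -> R) (D1 : nat -> (nat -> R) -> R) (D2 : nat -> nat -> (nat -> R) -> R).
Hypothesis HN : (2 <= N)%nat.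
Hypothesis Hfd : forall r, 0 < r -> derivable_pt_lim f r (f' r).
Hypothesis HC : C2_with N (fun x => f (enorm N x)) D1 D2.

Lemma A_D10 s : 0 < s -> D1 0 (e s) = f' s.
Proof.
  intros Hs. destruct HC as (_ & Hp & _). specialize (Hp 0%nat (e s) ltac:(lia)).
  unfold is_partial in Hp. replace (e s 0%nat) with s in Hp by (unfold e, upd; simpl; auto).
  apply (uniqueness_limite _ s _ _ Hp).
  apply dlim_ext with (f := comp f Rabs).
  - intros y. unfold comp. rewrite <- (enorm_e N y) by lia. f_equal. apply enorm_ext.
    intros i Hi. unfold e, upd. destruct (Nat.eqb i 0); auto.
  - eapply dlim_eq. apply derivable_pt_lim_comp. apply Rabs_derive_1; auto.
    rewrite Rabs_pos_eq by lra. apply Hfd; auto. ring.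
Qed.

Lemma A_D1i s i t : 0 < s -> (1 <= i < N)%nat ->
  D1 i (upd (e s) i t) = f' (sqrt (s ^ 2 + t ^ 2)) * (t / sqrt (s ^ 2 + t ^ 2)).
Proof.
  intros Hs Hi. destruct HC as (_ & Hp & _). specialize (Hp i (upd (e s) i t) ltac:(lia)).
  unfold is_partial in Hp. replace (upd (e s) i t i) with t in Hp by (unfold upd; rewrite Nat.eqb_refl; auto).
  apply (uniqueness_limite _ t _ _ Hp).
  assert (Hpos : 0 < s ^ 2 + t ^ 2) by (pose proof (pow2_ge_0 t); pose proof (pow_lt s 2 Hs); lra).
  apply dlim_ext with (f := comp f (fun y => sqrt (s ^ 2 + y ^ 2))).
  - intros y. unfold comp. f_equal. rewrite <- (enorm_e2 N s i y) by lia. apply enorm_ext.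
    intros j Hj. unfold upd. destruct (Nat.eqb j i); auto.
  - eapply dlim_eq. apply derivable_pt_lim_comp. apply drho; auto.
    apply Hfd. apply sqrt_lt_R0; auto. ring.
Qed.

Lemma A_D1i0 s i : 0 < s -> (1 <= i < N)%nat -> D1 i (e s) = 0.
Proof.
  intros Hs Hi. replace (e s) with (upd (e s) i 0).
  - rewrite A_D1i by auto. unfold Rdiv. ring.
  - apply functional_extensionality. intros j. unfold e, upd.
    destruct (Nat.eqb_spec j i); destruct (Nat.eqb_spec j 0); subst; auto; lia.
Qed.

Lemma A_fcont s : 0 < s -> continuity_pt f' s.
Proof.
  intros Hs. apply cont_eps. intros eps He. destruct HC as (_ & _ & Hc & _).
  destruct (Hc 0%nat ltac:(lia) (e s) eps He) as (d & Hd & Hdd).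
  exists (Rmin d s). split; [apply Rmin_pos; auto|]. intros y Hy.
  pose proof (Rmin_l d s). pose proof (Rmin_r d s).
  assert (0 < y) by (pose proof (Rle_abs (- (y - s))); rewrite Rabs_Ropp in H1; lra).
  rewrite <- A_D10, <- (A_D10 s) by auto. apply Hdd. rewrite edist_e by lia. lra.
Qed.

Lemma A_D2ii s i : 0 < s -> (1 <= i < N)%nat -> D2 i i (e s) = f' s / s.
Proof.
  intros Hs Hi. destruct HC as (_ & _ & _ & Hp & _). specialize (Hp i i (e s) ltac:(lia) ltac:(lia)).
  unfold is_partial in Hp. replace (e s i) with 0 in Hp by (unfold e, upd; destruct (Nat.eqb_spec i 0); [lia|auto]).
  apply (uniqueness_limite _ 0 _ _ Hp).
  set (rho := fun y => sqrt (s ^ 2 + y ^ 2)).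
  assert (Hr0 : rho 0 = s) by (unfold rho; replace (s ^ 2 + 0 ^ 2) with (s ^ 2) by ring; rewrite sqrt_sq; apply Rabs_pos_eq; lra).
  assert (Hrp : forall y, 0 < rho y) by (intros y; unfold rho; apply sqrt_lt_R0; pose proof (pow2_ge_0 y); pose proof (pow_lt s 2 Hs); lra).
  assert (Hk : continuity_pt (fun y => f' (rho y) / rho y) 0).
  { assert (Hcr : continuity_pt rho 0) by (apply derivable_continuous_pt; exists (0 / sqrt (s ^ 2 + 0 ^ 2)); apply drho; auto).
    apply (continuity_pt_div (comp f' rho) rho 0); auto.
    - apply continuity_pt_comp; auto. rewrite Hr0. apply A_fcont; auto.
    - specialize (Hrp 0). lra. }
  eapply dlim_eq.
  { apply (dlim_of_cont _ (fun y => f' (rho y) / rho y)); auto.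
    intros h. rewrite A_D1i by auto. fold (rho h). specialize (Hrp h). field. lra. }
  cbv beta. rewrite Hr0. reflexivity.
Qed.

Lemma A_main s : 0 < s ->
  derivable_pt_lim f' s (D2 0 0 (e s)) /\
  laplacian N D2 (e s) = D2 0 0 (e s) + (INR N - 1) * (f' s / s) /\
  gradnorm N D1 (e s) = Rabs (f' s).
Proof.
  intros Hs. split; [|split].
  - destruct HC as (_ & _ & _ & Hp & _). specialize (Hp 0%nat 0%nat (e s) ltac:(lia) ltac:(lia)).
    unfold is_partial in Hp. replace (e s 0%nat) with s in Hp by (unfold e, upd; simpl; auto).
    refine (dlim_loc _ _ _ _ s Hs _ Hp). intros y Hy. cbv beta.
    assert (0 < y) by (pose proof (Rle_abs (- (y - s))); rewrite Rabs_Ropp in H; lra).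
    rewrite <- A_D10 by auto. f_equal. apply functional_extensionality. intros j. unfold e, upd.
    destruct (Nat.eqb j 0); auto.
  - unfold laplacian. apply sumN_lap; auto; [lia|]. intros i Hi. apply A_D2ii; auto; lia.
  - unfold gradnorm. rewrite (sumN_ext N _ (fun j => if Nat.eqb j 0 then f' s ^ 2 else 0)).
    + rewrite sumN_pt by lia. apply sqrt_sq.
    + intros i Hi. destruct (Nat.eqb_spec i 0) as [->|Hne].
      * rewrite A_D10; auto.
      * rewrite A_D1i0 by (auto; lia). ring.
Qed.

Lemma A_bound : exists d B, 0 < d /\ forall s, 0 < s < d -> Rabs (f' s) <= B.
Proof.
  destruct HC as (_ & _ & Hc & _).
  destruct (Hc 0%nat ltac:(lia) (e 0) 1 ltac:(lra)) as (d & Hd & Hdd).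
  exists d, (Rabs (D1 0%nat (e 0)) + 1). split; auto. intros s Hs.
  rewrite <- A_D10 by lra. assert (Hl := Hdd (e s) ltac:(rewrite edist_e by lia; rewrite Rminus_0_r, Rabs_pos_eq; lra)).
  pose proof (Rabs_triang_inv (D1 0%nat (e s)) (D1 0%nat (e 0))). lra.
Qed.

Lemma A_cont0 : forall eps, 0 < eps -> exists d, 0 < d /\ forall s, 0 < s < d -> Rabs (f s - f 0) < eps.
Proof.
  intros eps He. destruct HC as (Hc & _).
  destruct (Hc (e 0) eps He) as (d & Hd & Hdd). exists d. split; auto. intros s Hs.
  specialize (Hdd (e s) ltac:(rewrite edist_e by lia; rewrite Rminus_0_r, Rabs_pos_eq; lra)).
  rewrite !enorm_e in Hdd by lia. rewrite Rabs_R0, (Rabs_pos_eq s) in Hdd by lra. auto.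
Qed.

End A.

Lemma div_le a b c : 0 < b -> a <= c * b -> a / b <= c.
Proof. intros Hb H. apply (Rmult_le_reg_r b); auto. unfold Rdiv. rewrite Rmult_assoc, Rinv_l by lra. lra. Qed.
Lemma le_div a b c : 0 < b -> c * b <= a -> c <= a / b.
Proof. intros Hb H. apply (Rmult_le_reg_r b); auto. unfold Rdiv. rewrite Rmult_assoc, Rinv_l by lra. lra. Qed.

Theorem lemma7p3 (N : nat) (p q : R) (u v u' v' : R -> R) :
  (2 <= N)%nat -> 0 < p -> p < 1 -> 1 <= q -> p * q < 1 ->
  radial_positive_solution N p q u v ->
  (forall r, 0 < r -> derivable_pt_lim u r (u' r)) ->
  (forall r, 0 < r -> derivable_pt_lim v r (v' r)) ->
  forall t : R,
    let r := exp t in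
    let Y := r * v' r / v r in
    let Z := r * Rpower (v r) p / u' r in
    let W := r * Rpower (u' r) q / v' r in
    (0 <= Y <= (2 + q) / (1 - p * q)) /\
    (INR N <= Z <= INR N + p * (2 + q) / (1 - p * q)) /\
    (INR N + q <= W <= INR N - 2 + (2 + q) / (1 - p * q)).
Proof.
  intros HN Hp0 Hp1 Hq1 Hpq [Hpos (DU1 & DU2 & DV1 & DV2 & HCu & HCv & Hlu & Hlv)] Hud Hvd t r Y Z W.
  assert (HNr : INR N - 1 = INR (N - 2) + 1).
  { replace N with (S (S (N - 2))) at 1 by lia. rewrite !S_INR. ring. }
  assert (HNr2 : INR N = INR (N - 2) + 2).
  { replace N with (S (S (N - 2))) at 1 by lia. rewrite !S_INR. ring. }
  set (M := (N - 2)%nat) in *.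
  assert (Hvpos : forall r, 0 < r -> 0 < v r) by (intros; apply Hpos; lra).
  assert (Hu1d : forall r, 0 < r -> derivable_pt_lim u' r (Rpower (v r) p - (INR M + 1) * (u' r / r))).
  { intros s Hs. destruct (A_main N u u' DU1 DU2 HN Hud HCu s Hs) as (Hd & Hlap & _).
    rewrite Hlu, enorm_e, Rabs_pos_eq in Hlap by lia || lra.
    eapply dlim_eq; [exact Hd|]. rewrite Hlap, HNr. ring. }
  assert (Hv1d : forall r, 0 < r -> derivable_pt_lim v' r (rpow0 (Rabs (u' r)) q - (INR M + 1) * (v' r / r))).
  { intros s Hs. destruct (A_main N u u' DU1 DU2 HN Hud HCu s Hs) as (_ & _ & Hg).
    destruct (A_main N v v' DV1 DV2 HN Hvd HCv s Hs) as (Hd & Hlap & _).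
    rewrite Hlv, Hg in Hlap.
    eapply dlim_eq; [exact Hd|]. rewrite Hlap, HNr. ring. }
  assert (Hv0 : 0 < v 0) by (apply Hpos; lra).
  assert (Hbd : exists d B, 0 < d /\ forall r, 0 < r < d -> Rabs (u' r) <= B /\ Rabs (v' r) <= B /\ v r <= B).
  { destruct (A_bound N u u' DU1 DU2 HN Hud HCu) as (d1 & B1 & Hd1 & HB1).
    destruct (A_bound N v v' DV1 DV2 HN Hvd HCv) as (d2 & B2 & Hd2 & HB2).
    destruct (A_cont0 N v DV1 DV2 HN HCv 1 ltac:(lra)) as (d3 & Hd3 & HB3).
    exists (Rmin d1 (Rmin d2 d3)), (Rmax B1 (Rmax B2 (v 0 + 1))). split.
    { apply Rmin_pos; auto. apply Rmin_pos; auto. }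
    intros s Hs. pose proof (Rmin_l d1 (Rmin d2 d3)). pose proof (Rmin_r d1 (Rmin d2 d3)).
    pose proof (Rmin_l d2 d3). pose proof (Rmin_r d2 d3).
    pose proof (Rmax_l B1 (Rmax B2 (v 0 + 1))). pose proof (Rmax_r B1 (Rmax B2 (v 0 + 1))).
    pose proof (Rmax_l B2 (v 0 + 1)). pose proof (Rmax_r B2 (v 0 + 1)).
    specialize (HB1 s ltac:(lra)). specialize (HB2 s ltac:(lra)). specialize (HB3 s ltac:(lra)).
    apply Rlt_le, abs_inv in HB3. lra. }
  assert (Hlow : exists d c, 0 < d /\ 0 < c /\ forall r, 0 < r < d -> c <= v r).
  { destruct (A_cont0 N v DV1 DV2 HN HCv (v 0 / 2) ltac:(lra)) as (d3 & Hd3 & HB3).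
    exists d3, (v 0 / 2). repeat split; auto; try lra. intros s Hs. specialize (HB3 s Hs). apply Rlt_le, abs_inv in HB3. lra. }
  assert (Hr : 0 < r) by apply exp_pos.
  destruct (all_bounds M p q v u' v' Hp0 Hp1 Hq1 Hpq Hvpos Hvd Hu1d Hv1d Hbd Hlow r Hr)
    as (Hu & Hv & HF & HG & HP & HH & HH2).
  pose proof (Hvpos r Hr).
  set (K := (2 + q) / (1 - p * q)) in *.
  assert (HK : 0 < K) by (unfold K; apply Rdiv_lt_0_compat; lra).
  rewrite HNr2. unfold Y, Z, W.
  assert (E1 : p * (2 + q) / (1 - p * q) = p * K) by (unfold K, Rdiv; ring).
  assert (E2 : INR M + 2 - 2 + K = INR M + K) by ring.
  rewrite E1, E2.
  repeat split.
  - apply le_div; auto. rewrite Rmult_0_l. nra.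
  - apply div_le; auto. lra.
  - apply le_div; auto. lra.
  - apply div_le; auto. lra.
  - apply le_div; auto. lra.
  - apply div_le; auto. lra.
Qed.
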